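(* For every small model $M\preceq\mathbb{C}$ and every full $C\supseteq M$, every $M$-f.s. sequence $\langle A_i:i\in I\rangle$ over $C$ is an order-congruence over $C$.
   Context: Work in a monster model $\mathbb{C}$ of an arbitrary complete theory. For $B\supseteq M$, $\mathrm{tp}(A/B)$ is finitely satisfied in $M$ if each of its formulas is satisfied by a tuple from $M$. $C\supseteq M$ is full if every type in $S_n(M)$, for every $n$, is realized in $C$. $A_{<i}=\bigcup_{j<i}A_j$. An $M$-f.s. sequence over $C$ is a sequence of sets $\langle A_i:i\in I\rangle$ with $\mathrm{tp}(A_i/A_{<i}C)$ finitely satisfied in $M$ for every $i$. It is an order-congruence over $C$ if for every $i^*\in I$, all $i^*\le i_1<\dots<i_n$ and $i^*\le j_1<\dots<j_n$ in $I$, and all finite tuples $\bar a_k$ from $A_{i_k}$, $\bar b_k$ from $A_{j_k}$ with $\mathrm{tp}(\bar a_k/C)=\mathrm{tp}(\bar b_k/C)$ ($k=1,\dots,n$), we have $\mathrm{tp}(\bar a_1\dots\bar a_n/CA_{<i^*})=\mathrm{tp}(\bar b_1\dots\bar b_n/CA_{<i^*})$. *)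

(* Defs.v *)
From mathcomp Require Import all_boot all_order.
Set Implicit Arguments. Unset Strict Implicit. Unset Printing Implicit Defensive.
Import Order.TTheory.

Record signature := Signature {
  fsym : Type; farity : fsym -> nat;
  rsym : Type; rarity : rsym -> nat }.

(* A structure for the signature (the monster model). *)
Record structure (L : signature) := Structure {
  carrier :> Type;
  funs : forall f : fsym L, ('I_(farity f) -> carrier) -> carrier;
  rels : forall r : rsym L, ('I_(rarity r) -> carrier) -> Prop }.

Inductive term (L : signature) : Type :=
  | Var : nat -> term L
  | App : forall f : fsym L, ('I_(farity f) -> term L) -> term L.

Inductive formula (L : signature) : Type :=
  | Eqf : term L -> term L -> formula L
  | Relf : forall r : rsym L, ('I_(rarity r) -> term L) -> formula L
  | Neg : formula L -> formula L
  | And : formula L -> formula L -> formula L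
  | Ex : nat -> formula L -> formula L.

Section Semantics.
Variables (L : signature) (S : structure L).

Fixpoint eval (v : nat -> S) (t : term L) : S :=
  match t with
  | Var i => v i
  | App f args => funs (fun j => eval v (args j))
  end.

Definition upd (v : nat -> S) (x : nat) (a : S) : nat -> S :=
  fun i => if i == x then a else v i.

Fixpoint sat_in (P : S -> Prop) (v : nat -> S) (phi : formula L) : Prop :=
  match phi with
  | Eqf t1 t2 => eval v t1 = eval v t2
  | Relf r args => rels (fun j => eval v (args j))
  | Neg psi => ~ sat_in P v psi
  | And psi chi => sat_in P v psi /\ sat_in P v chi
  | Ex x psi => exists a, P a /\ sat_in P (upd v x a) psi
  end.

Definition sat (v : nat -> S) (phi : formula L) : Prop :=
  sat_in (fun _ => True) v phi.

Definition elem_sub (M : S -> Prop) : Prop :=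
  (exists m, M m) /\
  (forall (f : fsym L) (args : 'I_(farity f) -> S),
      (forall j, M (args j)) -> M (funs args)) /\
  (forall (phi : formula L) (v : nat -> S),
      (forall i, M (v i)) -> (sat_in M v phi <-> sat v phi)).

(* Plugging a finite tuple a (indexed by a finite type X, enumerated by
   enum_val) into the variables 0, ..., #|X|-1; the remaining variables
   are given by e (they play the role of parameters). *)
Definition plug (X : finType) (a : X -> S) (e : nat -> S) : nat -> S :=
  fun i => match (insub i : option 'I_#|X|) with
           | Some j => a (enum_val j)
           | None => e i
           end.

Definition tp_eq (B : S -> Prop) (X : finType) (a b : X -> S) : Prop :=
  forall (phi : formula L) (e : nat -> S),
    (forall i, #|X| <= i -> B (e i)) ->
    (sat (plug a e) phi <-> sat (plug b e) phi).

Definition fs_in (M B A : S -> Prop) : Prop :=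
  forall (n : nat) (a : 'I_n -> S) (e : nat -> S) (phi : formula L),
    (forall j, A (a j)) -> (forall i, n <= i -> B (e i)) ->
    sat (plug a e) phi ->
    exists m : 'I_n -> S, (forall j, M (m j)) /\ sat (plug m e) phi.

(* p is a type in S_n(M): a complete set of L(M)-formulas in the
   variables 0..n-1 which is consistent with the theory of S with
   parameters from M, i.e. finitely satisfiable in S.  An L(M)-formula is
   a pair (phi, e) with e giving parameters from M to variables >= n. *)
Definition complete_type (M : S -> Prop) (n : nat)
    (p : formula L -> (nat -> S) -> Prop) : Prop :=
  (forall phi e, p phi e -> forall i, n <= i -> M (e i)) /\
  (forall phi e, (forall i, n <= i -> M (e i)) -> p phi e \/ p (Neg phi) e) /\
  (forall (m : nat) (fam : 'I_m -> formula L * (nat -> S)),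
      (forall k, p (fam k).1 (fam k).2) ->
      exists a : 'I_n -> S, forall k, sat (plug a (fam k).2) (fam k).1).

Definition full (M C : S -> Prop) : Prop :=
  (forall x, M x -> C x) /\
  forall (n : nat) (p : formula L -> (nat -> S) -> Prop),
    complete_type M n p ->
    exists c : 'I_n -> S, (forall j, C (c j)) /\
      forall phi e, p phi e -> sat (plug c e) phi.

Section Sequences.
Variables (d : Order.disp_t) (I : orderType d).

Definition A_lt (A : I -> S -> Prop) (i : I) : S -> Prop :=
  fun x => exists j, (j < i)%O /\ A j x.

Definition CA_lt (C : S -> Prop) (A : I -> S -> Prop) (i : I) : S -> Prop :=
  fun x => C x \/ A_lt A i x.

Definition fs_sequence (M C : S -> Prop) (A : I -> S -> Prop) : Prop :=
  forall i, fs_in M (CA_lt C A i) (A i).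

Definition concat_tuple (n : nat) (l : 'I_n -> nat)
    (a : forall k : 'I_n, 'I_(l k) -> S) : {k : 'I_n & 'I_(l k)} -> S :=
  fun t => a (tag t) (tagged t).

Definition order_congruence (C : S -> Prop) (A : I -> S -> Prop) : Prop :=
  forall (istar : I) (n : nat) (ix jx : 'I_n -> I) (l : 'I_n -> nat)
         (a b : forall k : 'I_n, 'I_(l k) -> S),
    (forall k, (istar <= ix k)%O) -> (forall k, (istar <= jx k)%O) ->
    (forall k k' : 'I_n, k < k' -> (ix k < ix k')%O) ->
    (forall k k' : 'I_n, k < k' -> (jx k < jx k')%O) ->
    (forall k p, A (ix k) (a k p)) -> (forall k p, A (jx k) (b k p)) ->
    (forall k, tp_eq C (a k) (b k)) ->
    tp_eq (CA_lt C A istar) (concat_tuple a) (concat_tuple b).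

End Sequences.
End Semantics.

(* Main.v *)
Require Import Defs.
From mathcomp Require Import all_boot all_order.
From Stdlib Require Import FunctionalExtensionality Classical.
Set Implicit Arguments. Unset Strict Implicit. Unset Printing Implicit Defensive.
Import Order.TTheory.

Fixpoint tbound {L : signature} (t : term L) : nat :=
  match t with
  | Var i => i.+1
  | App f args => \max_(j < farity f) tbound (args j)
  end.

Fixpoint fbound {L : signature} (phi : formula L) : nat :=
  match phi with
  | Eqf t1 t2 => maxn (tbound t1) (tbound t2)
  | Relf r args => \max_(j < rarity r) tbound (args j)
  | Neg psi => fbound psi
  | And psi chi => maxn (fbound psi) (fbound chi)
  | Ex x psi => fbound psi
  end.

Fixpoint trename {L : signature} (s : nat -> nat) (t : term L) : term L :=
  match t with
  | Var i => Var L (s i)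
  | App f args => App (fun j => trename s (args j))
  end.

Lemma eval_rename (L : signature) (S : structure L) (v : nat -> S) s (t : term L) :
  eval v (trename s t) = eval (fun i => v (s i)) t.
Proof.
elim: t => [i|f args IH] //=.
f_equal; apply: functional_extensionality => j; exact: IH.
Qed.

Lemma eval_bound (L : signature) (S : structure L) (v w : nat -> S) (t : term L) :
  (forall i, i < tbound t -> v i = w i) -> eval v t = eval w t.
Proof.
elim: t => [i|f args IH] /= H; first by apply: H.
f_equal; apply: functional_extensionality => j; apply: IH => i Hi.
apply: H; apply: leq_trans Hi _; exact: (leq_bigmax (F := fun j => tbound (args j)) j).
Qed.

Lemma sat_bound (L : signature) (S : structure L) (P : S -> Prop) (phi : formula L) :
  forall (v w : nat -> S), (forall i, i < fbound phi -> v i = w i) ->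
  (sat_in P v phi <-> sat_in P w phi).
Proof.
elim: phi => [t1 t2|r args|psi IH|psi IH chi IH'|x psi IH] v w H /=.
- rewrite (eval_bound (v:=v) (w:=w)) ?(eval_bound (v:=v) (w:=w) (t:=t2)) //.
  + by move=> i Hi; apply: H; rewrite leq_max Hi orbT.
  + by move=> i Hi; apply: H; rewrite leq_max Hi.
- have -> : (fun j => eval v (args j)) = (fun j => eval w (args j)) => //.
  apply: functional_extensionality => j; apply: eval_bound => i Hi.
  apply: H; apply: leq_trans Hi _; exact: (leq_bigmax (F := fun j => tbound (args j)) j).
- by rewrite (IH v w H).
- rewrite (IH v w) ?(IH' v w) //.
  + by move=> i Hi; apply: H; rewrite leq_max Hi orbT.
  + by move=> i Hi; apply: H; rewrite leq_max Hi.
- have K : forall a, sat_in P (upd v x a) psi <-> sat_in P (upd w x a) psi.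
    by move=> a; apply: IH => i Hi; rewrite /upd; case: (i == x) => //; apply: H.
  by split=> -[a [Pa Ha]]; exists a; split=> //; [rewrite -K | rewrite K].
Qed.

Lemma rename_ex (L : signature) (S : structure L) (P : S -> Prop) (phi : formula L) :
  forall (s : nat -> nat), exists phi' : formula L, forall v : nat -> S,
    sat_in P v phi' <-> sat_in P (fun i => v (s i)) phi.
Proof.
elim: phi => [t1 t2|r args|psi IH|psi IH chi IH'|x psi IH] s.
- exists (Eqf (trename s t1) (trename s t2)) => v /=; by rewrite !eval_rename.
- exists (Relf (fun j => trename s (args j))) => v /=.
  have -> // : (fun j => eval v (trename s (args j))) = (fun j => eval (fun i => v (s i)) (args j)).
  by apply: functional_extensionality => j; rewrite eval_rename.
- have [psi' H] := IH s; exists (Neg psi') => v /=; by rewrite H.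
- have [psi' H] := IH s; have [chi' H'] := IH' s; exists (And psi' chi') => v /=.
  by rewrite H H'.
- pose y := (\max_(i < fbound psi) s i).+1.
  have [psi' H] := IH (fun i => if i == x then y else s i).
  exists (Ex y psi') => v /=.
  have K : forall a, sat_in P (upd v y a) psi' <-> sat_in P (upd (fun i => v (s i)) x a) psi.
    move=> a; rewrite H; apply: sat_bound => i Hi; rewrite /upd; case: (i == x); rewrite ?eqxx //.
    have : s i < y by rewrite ltnS; exact: (leq_bigmax (F := fun i : 'I_(fbound psi) => s i) (Ordinal Hi)).
    by rewrite ltn_neqAle => /andP[/negbTE -> _].
  by split=> -[a [Pa Ha]]; exists a; split=> //; [rewrite -K | rewrite K].
Qed.

Definition V {L : signature} {S : structure L} {J : Type} (x : J -> S)
  (rho : nat -> J + S) : nat -> S :=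
  fun i => match rho i with inl t => x t | inr s => s end.

Definition tpP {L : signature} {S : structure L} (B : S -> Prop) {J : Type}
  (P : J -> Prop) (x y : J -> S) : Prop :=
  forall (phi : formula L) (rho : nat -> J + S),
    (forall i s, rho i = inr s -> B s) -> (forall i t, rho i = inl t -> P t) ->
    (sat (V x rho) phi <-> sat (V y rho) phi).

Lemma plug_rank (L : signature) (S : structure L) (X : finType) (a : X -> S) e x :
  plug a e (enum_rank x) = a x.
Proof. by rewrite /plug valK enum_rankK. Qed.

Lemma plug_ge (L : signature) (S : structure L) (X : finType) (a : X -> S) e i :
  #|X| <= i -> plug a e i = e i.
Proof. by move=> H; rewrite /plug insubN // -leqNgt. Qed.

Lemma to_plug (L : signature) (S : structure L) (X : finType) (J : Type) (h : J -> X)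
  (B : S -> Prop) (d0 : S) (rho : nat -> J + S) :
  B d0 -> (forall i s, rho i = inr s -> B s) ->
  exists (sg : nat -> nat) (e : nat -> S), (forall i, B (e i)) /\
    forall y : X -> S, V (fun t => y (h t)) rho = (fun i => plug y e (sg i)).
Proof.
move=> Bd Hr.
exists (fun i => match rho i with inl t => nat_of_ord (enum_rank (h t)) | inr _ => #|X| + i end).
exists (fun j => match rho (j - #|X|) with inr s => s | inl _ => d0 end).
split.
  by move=> i; case E: (rho (i - #|X|)) => //; exact: Hr E.
move=> y; apply: functional_extensionality => i; rewrite /V.
case E: (rho i) => [t|s]; first by rewrite plug_rank.
by rewrite plug_ge ?leq_addr //= addKn E.
Qed.

Lemma tpeq_tpP (L : signature) (S : structure L) (B : S -> Prop) (X : finType)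
  (a b : X -> S) (P : X -> Prop) (d0 : S) :
  B d0 -> tp_eq B a b -> tpP B P a b.
Proof.
move=> Bd H phi rho Hr _.
have [sg [e [He Heq]]] := to_plug id Bd Hr.
have [phi' Hphi] := rename_ex (fun _ : S => True) phi sg.
have Ea : V a rho = (fun i => plug a e (sg i)) := Heq a.
have Eb : V b rho = (fun i => plug b e (sg i)) := Heq b.
rewrite /sat Ea Eb -!Hphi; apply: H => i _; exact: He.
Qed.

Lemma tpP_tpeq (L : signature) (S : structure L) (B : S -> Prop) (X : finType)
  (a b : X -> S) (P : X -> Prop) :
  (forall t, P t) -> tpP B P a b -> tp_eq B a b.
Proof.
move=> HP H phi e He.
pose rho i := match (insub i : option 'I_#|X|) with
              | Some j => inl (enum_val j) | None => inr (e i) end.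
have Eq : forall y : X -> S, V y rho = plug y e.
  by move=> y; apply: functional_extensionality => i; rewrite /V /rho /plug; case: insub.
rewrite -!Eq; apply: H => // i s; rewrite /rho; case: insubP => [j _ _ //|].
by rewrite -leqNgt => Hi [<-]; exact: He.
Qed.

Lemma tpP_sym (L : signature) (S : structure L) (B : S -> Prop) (J : Type)
  (P : J -> Prop) x y : tpP B P x y -> tpP B P y x.
Proof. by move=> H phi rho H1 H2; rewrite (H phi rho H1 H2). Qed.

Lemma tpP_trans (L : signature) (S : structure L) (B : S -> Prop) (J : Type)
  (P : J -> Prop) x y z : tpP B P x y -> tpP B P y z -> tpP B P x z.
Proof. by move=> H H' phi rho H1 H2; rewrite (H phi rho H1 H2) (H' phi rho H1 H2). Qed.

Lemma fsJ (L : signature) (S : structure L) (M D A0 : S -> Prop) (d0 : S)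
  (J : finType) (Q : pred J) (x : J -> S) (rho : nat -> J + S) (psi : formula L) :
  fs_in M D A0 -> D d0 -> (forall t, Q t -> A0 (x t)) ->
  (forall i s, rho i = inr s -> D s) -> (forall i t, rho i = inl t -> Q t) ->
  sat (V x rho) psi ->
  exists m : J -> S, (forall t, Q t -> M (m t)) /\ sat (V m rho) psi.
Proof.
move=> Hfs Dd HA Hr Hl Hs.
pose K := {t : J | Q t}.
pose rK i : K + S := match rho i with
   | inl t => (match (insub t : option K) with Some k => inl k | None => inr d0 end)
   | inr s => inr s end.
have Hsub : forall y : J -> S, V y rho = V (fun k : K => y (val k)) rK.
  move=> y; apply: functional_extensionality => i; rewrite /V /rK.
  case E: (rho i) => [t|s] //; case: insubP => [k _ -> //|].
  by rewrite (Hl _ _ E).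
have HrK : forall i s, rK i = inr s -> D s.
  move=> i s; rewrite /rK; case E: (rho i) => [t|s'].
    by case: insub => [k|] // [<-].
  by case=> <-; exact: Hr E.
pose n := #|{: K}|.
pose a : 'I_n -> S := fun j => x (val (enum_val j)).
have [sg [e [He Heq]]] := to_plug (X := 'I_n) (fun k : K => enum_rank k) Dd HrK.
have [psi' Hpsi] := rename_ex (fun _ : S => True) psi sg.
have Ha : V x rho = (fun i => plug a e (sg i)).
  rewrite Hsub -Heq; congr V; apply: functional_extensionality => k.
  by rewrite /a enum_rankK.
have [m [HM Hm]] : exists m : 'I_n -> S, (forall j, M (m j)) /\ sat (plug m e) psi'.
  apply: Hfs => //.
  - by move=> j; apply: HA; exact: (valP (enum_val j)).
  - by rewrite /sat Hpsi -Ha.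
exists (fun t => match (insub t : option K) with Some k => m (enum_rank k) | None => d0 end).
split.
  by move=> t Qt; case: insubP => [k _ _|]; [exact: HM | rewrite Qt].
rewrite Hsub.
have -> : (fun k : K => match (insub (val k) : option K) with
              Some k => m (enum_rank k) | None => d0 end) = (fun k => m (enum_rank k)).
  by apply: functional_extensionality => k; rewrite valK.
by rewrite Heq /sat -Hpsi.
Qed.

Lemma realize (L : signature) (S : structure L) (M C : S -> Prop) (m0 : S) (Nb : nat)
  (z : 'I_Nb -> S) :
  full M C -> M m0 -> exists z' : 'I_Nb -> S, (forall j, C (z' j)) /\ tpP M (fun _ => True) z z'.
Proof.
case=> HMC Hfull HM0.
pose p phi e := (forall i, Nb <= i -> M (e i)) /\ sat (plug z e) phi.
have Hct : complete_type M Nb p.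
  split; first by move=> phi e [].
  split.
    move=> phi e He; case: (classic (sat (plug z e) phi)) => H; [left|right]; by split.
  by move=> k fam Hfam; exists z => j; exact: (Hfam j).2.
have [c [Hc Hp]] := Hfull Nb p Hct.
exists c; split => //.
apply: (tpeq_tpP (d0 := m0)) => // phi e He.
have He' : forall i, Nb <= i -> M (e i) by move=> i; rewrite -{1}(card_ord Nb); exact: He.
split=> H; first exact: Hp phi e (conj He' H).
apply: NNPP => H'; exact: (Hp (Neg phi) e (conj He' H') H).
Qed.

Definition newf {L : signature} {S : structure L} {J : Type} (NB : J -> bool)
  (rho : nat -> J + S) (i : nat) : bool :=
  if rho i is inl t then NB t else false.

Definition zpp {L : signature} {S : structure L} (Nb : nat) (z' : 'I_Nb -> S) (m0 : S)
  (i : nat) : S :=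
  if (insub i : option 'I_Nb) is Some j then z' j else m0.

Lemma key1 (L : signature) (S : structure L) (M D A0 : S -> Prop) (m0 : S)
  (J : finType) (x : J -> S) (NB : pred J) (rho : nat -> J + S) (Nb : nat)
  (z z' : 'I_Nb -> S) (phi : formula L) :
  fs_in M D A0 -> M m0 -> (forall s, M s -> D s) -> (forall j, D (z' j)) ->
  (forall t, NB t -> A0 (x t)) ->
  (forall i t, rho i = inl t -> ~~ NB t -> D (x t)) ->
  (forall i s, rho i = inr s -> D s) ->
  fbound phi <= Nb ->
  (forall j : 'I_Nb, ~~ newf NB rho j -> z j = V x rho j) ->
  tpP M (fun _ => True) z z' ->
  sat (V x rho) phi ->
  sat (fun i => if newf NB rho i then V x rho i else zpp z' m0 i) phi.
Proof.
move=> Hfs Mm0 HMD HDz' HA Hold Hpar Hb Hz Htp Hs.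
apply: NNPP => Hn.
pose rW j : J + S := if odd j then inr (zpp z' m0 j./2) else
   match rho j./2 with inl t => if NB t then inl t else inr (x t) | inr s => inr s end.
have [phi1 H1] := rename_ex (fun _ : S => True) phi (fun i => i.*2).
have [phi2 H2] := rename_ex (fun _ : S => True) phi
   (fun i => if newf NB rho i then i.*2 else i.*2.+1).
have E1 : forall y : J -> S, (fun i => V y rW i.*2) =
    (fun i => match rho i with inl t => if NB t then y t else x t | inr s => s end).
  move=> y; apply: functional_extensionality => i; rewrite /V /rW odd_double doubleK.
  by case: (rho i) => [t|s] //; case: (NB t).
have E2 : forall y : J -> S,
    (fun i => V y rW (if newf NB rho i then i.*2 else i.*2.+1)) =
    (fun i => if newf NB rho i then (match rho i with inl t => y t | inr s => s end)
              else zpp z' m0 i).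
  move=> y; apply: functional_extensionality => i; rewrite /newf.
  case E: (rho i) => [t|s]; last by rewrite /V /rW /= odd_double uphalf_double.
  case Ht: (NB t); rewrite /V /rW /= odd_double ?uphalf_double // doubleK E Ht //.
have HVx : (fun i => match rho i with inl t => if NB t then x t else x t | inr s => s end)
           = V x rho.
  by apply: functional_extensionality => i; rewrite /V; case: (rho i) => [t|s] //; case: (NB t).
have HU : (fun i => if newf NB rho i then (match rho i with inl t => x t | inr s => s end)
              else zpp z' m0 i) = (fun i => if newf NB rho i then V x rho i else zpp z' m0 i).
  by [].
have HsW : sat (V x rW) (And phi1 (Neg phi2)).
  split; first by rewrite /sat H1 E1 HVx.
  by rewrite /sat /= H2 E2 HU.
have HrW : forall j s, rW j = inr s -> D s.
  move=> j s; rewrite /rW; case: (odd j).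
    case=> <-; rewrite /zpp; case: insub => [k|]; [exact: HDz' | exact: HMD].
  case E: (rho j./2) => [t|s'].
    by case Ht: (NB t) => // -[<-]; apply: (Hold _ _ E); rewrite Ht.
  by case=> <-; exact: Hpar E.
have HlW : forall j t, rW j = inl t -> NB t.
  move=> j t; rewrite /rW; case: (odd j) => //.
  by case: (rho j./2) => [t'|s'] //; case Ht: (NB t') => // -[<-].
have [m [HM Hm]] := fsJ (d0 := m0) (Q := NB) Hfs (HMD _ Mm0) HA HrW HlW HsW.
case: Hm => Hm1 Hm2.
have {}Hm1 : sat (V m rW) phi1 := Hm1. have {}Hm2 : ~ sat (V m rW) phi2 := Hm2.
move: Hm1; rewrite /sat H1 E1 => Hm1.
have Hm2' : ~ sat (fun i => if newf NB rho i then
                     (match rho i with inl t => m t | inr s => s end)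
                   else zpp z' m0 i) phi.
  by move=> H; apply: Hm2; move: H; rewrite /sat H2 E2.
pose rz i : 'I_Nb + S := if (insub i : option 'I_Nb) is Some j then
    (if newf NB rho i then inr (match rho i with inl t => m t | inr s => s end) else inl j)
  else inr m0.
have Hrz1 : forall i s, rz i = inr s -> M s.
  move=> i s; rewrite /rz; case: insub => [j|]; last by case=> <-.
  rewrite /newf; case E: (rho i) => [t|s'] //.
  by case Ht: (NB t) => // -[<-]; exact: HM.
have := Htp phi rz Hrz1 (fun _ _ _ => I).
move=> Hiff; apply: Hm2'.
have <- : sat (V z' rz) phi <-> sat (fun i => if newf NB rho i then
                     (match rho i with inl t => m t | inr s => s end)
                   else zpp z' m0 i) phi.
  apply: sat_bound => i Hi; have Hi' : i < Nb := leq_trans Hi Hb.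
  rewrite /V /rz /zpp; case: insubP => [j _ <-|]; last by rewrite Hi'.
  by case: (newf NB rho j).
apply/Hiff.
have <- : sat (fun i => match rho i with inl t => if NB t then m t else x t | inr s => s end) phi
   <-> sat (V z rz) phi.
  apply: sat_bound => i Hi; have Hi' : i < Nb := leq_trans Hi Hb.
  rewrite /V /rz; case: insubP => [j _ Ej|]; last by rewrite Hi'.
  case Hnj: (newf NB rho i).
    by move: Hnj; rewrite /newf; case: (rho i) => [t|s] // ->.
  rewrite Hz; last by rewrite Ej Hnj.
  rewrite /V Ej; move: Hnj; rewrite /newf; case: (rho i) => [t|s] //.
  by move=> ->.
exact: Hm1.
Qed.

Lemma key (L : signature) (S : structure L) (M D A0 : S -> Prop) (m0 : S)
  (J : finType) (x : J -> S) (NB : pred J) (rho : nat -> J + S) (Nb : nat)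
  (z z' : 'I_Nb -> S) (phi : formula L) :
  fs_in M D A0 -> M m0 -> (forall s, M s -> D s) -> (forall j, D (z' j)) ->
  (forall t, NB t -> A0 (x t)) ->
  (forall i t, rho i = inl t -> ~~ NB t -> D (x t)) ->
  (forall i s, rho i = inr s -> D s) ->
  fbound phi <= Nb ->
  (forall j : 'I_Nb, ~~ newf NB rho j -> z j = V x rho j) ->
  tpP M (fun _ => True) z z' ->
  (sat (V x rho) phi <->
   sat (fun i => if newf NB rho i then V x rho i else zpp z' m0 i) phi).
Proof.
move=> h1 h2 h3 h4 h5 h6 h7 h8 h9 h10; split; first by move=> Hs; exact: (key1 h1 h2 h3 h4 h5 h6 h7 h8 h9 h10 Hs).
move=> HU; apply: NNPP => Hn.
exact: (key1 (phi := Neg phi) h1 h2 h3 h4 h5 h6 h7 h8 h9 h10 Hn HU).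
Qed.

Lemma cast_tuple (L : signature) (S : structure L) (n : nat) (l : 'I_n -> nat)
  (y : forall k : 'I_n, 'I_(l k) -> S) (k k' : 'I_n) (E : k' = k) (p : 'I_(l k')) :
  y k (cast_ord (congr1 l E) p) = y k' p.
Proof. by case: k / E; rewrite cast_ord_id. Qed.

Theorem proposition2 (L : signature) (S : structure L) (M C : S -> Prop)
    (d : Order.disp_t) (I : orderType d) (A : I -> S -> Prop) :
  elem_sub M -> full M C -> fs_sequence M C A -> order_congruence C A.
Proof.
move=> Hel Hfull Hfs istar n ix jx l a b Hi Hj Hix Hjx Ha Hb Htp.
have [[m0 Mm0] _] := Hel.
have HMC := Hfull.1.
pose J := {k : 'I_n & 'I_(l k)}.
pose ca : J -> S := concat_tuple a.
pose cb : J -> S := concat_tuple b.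
pose Bs := CA_lt C A istar.
suff Q : forall m, m <= n -> tpP Bs (fun t : J => tag t < m) ca cb.
  apply: (tpP_tpeq (P := fun t : J => tag t < n)); last exact: Q.
  by move=> t; exact: ltn_ord.
elim=> [_|m IH Hmn].
  move=> phi rho _ Hl; have -> // : V ca rho = V cb rho.
  apply: functional_extensionality => i; rewrite /V; case E: (rho i) => [t|s] //.
  by have := Hl _ _ E.
have Hmn' : m <= n := ltnW Hmn.
pose k := Ordinal Hmn.
move=> phi rho Hpar Hl.
pose NB := fun t : J => tag t == k.
have Hold : forall i t, rho i = inl t -> ~~ NB t -> tag t < m.
  move=> i t E Hn; have := Hl _ _ E; rewrite ltnS leq_eqVlt => /orP[/eqP E2|//].
  by exfalso; move/eqP: Hn; apply; apply: val_inj.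
pose Nb := fbound phi.
pose za : 'I_Nb -> S := fun j => if newf NB rho j then m0 else V ca rho j.
pose zb : 'I_Nb -> S := fun j => if newf NB rho j then m0 else V cb rho j.
have [z' [Hz'C Hz']] := realize za Hfull Mm0.
have Hab : tpP M (fun _ => True) za zb.
  move=> phi' rho' Hp' _.
  pose r i : J + S := match rho' i with
     | inr s => inr s | inl j => if newf NB rho j then inr m0 else rho j end.
  have Ea : forall y : J -> S, V (fun j : 'I_Nb => if newf NB rho j then m0 else V y rho j) rho'
             = V y r.
    move=> y; apply: functional_extensionality => i; rewrite /V /r.
    by case: (rho' i) => [j|s] //; case: (newf NB rho j).
  rewrite Ea Ea; apply: IH => //.
  - move=> i s; rewrite /r; case E: (rho' i) => [j|s'].
      case: (newf NB rho j) => [[<-]|]; first by left; exact: HMC.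
      move=> E'; exact: Hpar E'.
    by case=> <-; left; apply: HMC; exact: Hp' E.
  - move=> i t; rewrite /r; case: (rho' i) => [j|s] //.
    case Hn: (newf NB rho j) => // E.
    by apply: (Hold _ _ E); move: Hn; rewrite /newf E => ->.
have Hzb : tpP M (fun _ => True) zb z' := tpP_trans (tpP_sym Hab) Hz'.
have HMD : forall (i : I) s, M s -> CA_lt C A i s by move=> i s Ms; left; exact: HMC.
have HzD : forall (i : I) j, CA_lt C A i (z' j) by move=> i j; left; exact: Hz'C.
have Hpar' : forall (i0 : I), (istar <= i0)%O -> forall i s, rho i = inr s -> CA_lt C A i0 s.
  move=> i0 Hi0 i s E; case: (Hpar _ _ E) => [Cs|[j [Hj' Ajs]]]; first by left.
  by right; exists j; split => //; exact: lt_le_trans Hj' Hi0.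
have C1a : sat (V ca rho) phi <->
   sat (fun i => if newf NB rho i then V ca rho i else zpp z' m0 i) phi.
  apply: (key (D := CA_lt C A (ix k)) (A0 := A (ix k)) (z := za)) => //.
  all: try exact: (Hfs (ix k)).
  all: try exact: HMD.
  all: try exact: HzD.
  all: try exact: (Hpar' _ (Hi k)).
  all: try by move=> j Hn; rewrite /za (negbTE Hn).
  all: try by move=> t /eqP E; rewrite /ca /concat_tuple -E; exact: Ha.
  move=> i t E Hn; right; exists (ix (tag t)); split; last exact: Ha.
  by apply: Hix; exact: (Hold _ _ E Hn).
have C1b : sat (V cb rho) phi <->
   sat (fun i => if newf NB rho i then V cb rho i else zpp z' m0 i) phi.
  apply: (key (D := CA_lt C A (jx k)) (A0 := A (jx k)) (z := zb)) => //.
  all: try exact: (Hfs (jx k)).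
  all: try exact: HMD.
  all: try exact: HzD.
  all: try exact: (Hpar' _ (Hj k)).
  all: try by move=> j Hn; rewrite /zb (negbTE Hn).
  all: try by move=> t /eqP E; rewrite /cb /concat_tuple -E; exact: Hb.
  move=> i t E Hn; right; exists (jx (tag t)); split; last exact: Hb.
  by apply: Hjx; exact: (Hold _ _ E Hn).
have Hk : tpP C (fun _ => True) (a k) (b k) := tpeq_tpP (d0 := m0) (HMC _ Mm0) (Htp k).
pose r2 i : 'I_(l k) + S := match rho i with
  | inl t => (match tag t =P k with
              | ReflectT E => inl (cast_ord (congr1 l E) (tagged t))
              | ReflectF _ => inr (zpp z' m0 i) end)
  | inr _ => inr (zpp z' m0 i) end.
have E2 : forall y : forall k : 'I_n, 'I_(l k) -> S, V (y k) r2 =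
   (fun i => if newf NB rho i then V (concat_tuple y) rho i else zpp z' m0 i).
  move=> y; apply: functional_extensionality => i; rewrite /V /r2 /newf /NB.
  case: (rho i) => [t|s] //; case: (tag t =P k) => [E|Ne] //.
  by rewrite cast_tuple.
have Hr2 : forall i s, r2 i = inr s -> C s.
  have HzC : forall i, C (zpp z' m0 i).
    by move=> i; rewrite /zpp; case: insub => [j|]; [exact: Hz'C | exact: HMC].
  move=> i s; rewrite /r2; case: (rho i) => [t|s'].
    by case: (tag t =P k) => [E|Ne] // [<-].
  by case=> <-.
rewrite C1a C1b -E2 -E2; exact: Hk.
Qed.
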